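(* Let $\varphi\neq0$ and $\phi$ be real numbers and $$M_A=\begin{pmatrix} i\cosh\varphi & e^{i\phi}\sinh\varphi\\ e^{-i\phi}\sinh\varphi & -i\cosh\varphi\end{pmatrix},\qquad M_B=\begin{pmatrix} i&0\\0&-i\end{pmatrix}.$$ Let $M_1,M_2,\dots$ be independent random matrices, each equal to $M_A$ or $M_B$ with probability $1/2$, and write $\Pi_n=M_1\cdots M_n=\begin{pmatrix}\alpha_n&\beta_n\\ \beta_n^*&\alpha_n^*\end{pmatrix}$. Then for every integer $k\ge1$, $$\mathbb{E}\left(|\alpha_{2k-1}|^2+|\beta_{2k-1}|^2\right)=\mathbb{E}\left(|\alpha_{2k}|^2+|\beta_{2k}|^2\right)=(\cosh\varphi)^{2k},$$ and consequently $\lim_{n\to\infty}\frac{1}{2n}\log\mathbb{E}\left(|\alpha_n|^2+|\beta_n|^2\right)=\frac12\log\cosh\varphi>0$.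
   Context: $\mathbb{E}$ denotes expectation over the random choices of $M_1,\dots,M_n$. The matrices $M_A,M_B$ lie in $\operatorname{SU}(1,1)$ and are traceless (reflection matrices). *)

(* Defs.v *)
From HB Require Import structures.
From mathcomp Require Import all_boot all_order all_algebra.
From mathcomp Require Import all_classical all_reals all_analysis.
From mathcomp Require Import complex.
Set Implicit Arguments. Unset Strict Implicit. Unset Printing Implicit Defensive.
Import Order.TTheory GRing.Theory Num.Theory.
Local Open Scope ring_scope.

Definition coshr {R : realType} (x : R) : R := (expR x + expR (- x)) / 2.
Definition sinhr {R : realType} (x : R) : R := (expR x - expR (- x)) / 2.

Definition cexpi {R : realType} (phi : R) : R[i] := (cos phi +i* sin phi)%C.

Definition MA {R : realType} (vphi phi : R) : 'M[R[i]]_2 :=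
  \matrix_(i < 2, j < 2)
    if (i == 0) && (j == 0) then (0 +i* coshr vphi)%C
    else if (i == 0) && (j == 1) then (cexpi phi * (sinhr vphi)%:C)%C
    else if (i == 1) && (j == 0) then (cexpi (- phi) * (sinhr vphi)%:C)%C
    else (0 +i* (- coshr vphi))%C.

Definition MB {R : realType} : 'M[R[i]]_2 :=
  \matrix_(i < 2, j < 2)
    if (i == 0) && (j == 0) then (0 +i* 1)%C
    else if (i == 1) && (j == 1) then (0 +i* (-1))%C
    else 0.

Definition Pi {R : realType} (vphi phi : R) (n : nat) (s : {ffun 'I_n -> bool})
  : 'M[R[i]]_2 := \prod_(k < n) (if s k then MA vphi phi else MB).

Definition normAB {R : realType} (P : 'M[R[i]]_2) : R :=
  ComplexField.Normc.normc (P 0 0) ^+ 2 + ComplexField.Normc.normc (P 0 1) ^+ 2.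

Definition expect_n {R : realType} (vphi phi : R) (n : nat) : R :=
  (2 ^+ n)^-1 * \sum_(s : {ffun 'I_n -> bool}) normAB (Pi vphi phi s).

(* Main.v *)
Require Import Defs.
From HB Require Import structures.
From mathcomp Require Import all_boot all_order all_algebra.
From mathcomp Require Import all_classical all_reals all_analysis.
From mathcomp Require Import complex.
From mathcomp Require Import ring lra zify.
Import Order.TTheory GRing.Theory Num.Theory.
Import numFieldNormedType.Exports.
Local Open Scope ring_scope.
Local Open Scope complex_scope.
Lemma mulcE (R : realType) (a b c d : R) : (a +i* b) * (c +i* d) = (a*c - b*d) +i* (a*d + b*c).
Proof. by []. Qed.
Lemma addcE (R : realType) (a b c d : R) : (a +i* b) + (c +i* d) = (a+c) +i* (b+d).
Proof. by []. Qed.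
Lemma oppcE (R : realType) (a b : R) : - (a +i* b) = (-a) +i* (-b).
Proof. by []. Qed.
Lemma realcE (R : realType) (a : R) : a%:C = a +i* 0.
Proof. by []. Qed.
Lemma mul2E (R : realType) (P M : 'M[R[i]]_2) i j : (P * M) i j = P i 0 * M 0 j + P i 1 * M 1 j.
Proof. rewrite [LHS]mxE big_ord_recr big_ord1 /=. have -> : widen_ord (leqnSn 1) ord0 = 0 :> 'I_2 by apply: val_inj. have -> : ord_max = 1 :> 'I_2 by apply: val_inj. by []. Qed.

Definition bh {R : realType} (phi : R) (P : 'M[R[i]]_2) : R[i] := cexpi (- phi) * P 0 1.
Definition SS {R : realType} (phi : R) (P : 'M[R[i]]_2) : R :=
  complex.Re (P 0 0) ^+ 2 + complex.Im (P 0 0) ^+ 2 + complex.Re (bh phi P) ^+ 2 + complex.Im (bh phi P) ^+ 2.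
Definition YY {R : realType} (phi : R) (P : 'M[R[i]]_2) : R :=
  complex.Im (P 0 0) * complex.Re (bh phi P) - complex.Re (P 0 0) * complex.Im (bh phi P).

Lemma normc2 (R : realType) (z : R[i]) : ComplexField.Normc.normc z ^+ 2 = complex.Re z ^+ 2 + complex.Im z ^+ 2.
Proof. case: z => a b /=. rewrite sqr_sqrtr //. by rewrite addr_ge0 // sqr_ge0. Qed.

Lemma normAB_SS (R : realType) (phi : R) P : normAB P = SS phi P.
Proof.
rewrite /normAB /SS /bh !normc2 /cexpi cosN sinN.
case: (P 0 0) => a b; case: (P 0 1) => c d /=.
have h := cos2Dsin2 phi.
transitivity (a ^+ 2 + b ^+ 2 + (cos phi ^+ 2 + sin phi ^+ 2) * (c ^+ 2 + d ^+ 2)).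
  by rewrite h mul1r addrA.
ring.
Qed.

Lemma cexpiK (R : realType) (phi : R) : cexpi (- phi) * cexpi phi = 1.
Proof.
rewrite /cexpi cosN sinN mulcE.
have h := cos2Dsin2 phi.
apply/eqP; rewrite eq_complex /=; apply/andP; split; apply/eqP.
  rewrite -h; ring.
ring.
Qed.

Section S.
Lemma alMA (R : realType) (vphi phi : R) P :
  (P * MA vphi phi) 0 0 = (0 +i* coshr vphi) * P 0 0 + (sinhr vphi)%:C * bh phi P.
Proof.
rewrite mul2E !mxE /= /bh. rewrite [P 0 0 * _]mulrC. congr (_ + _).
ring.
Qed.
Lemma bhMA (R : realType) (vphi phi : R) P :
  bh phi (P * MA vphi phi) = (sinhr vphi)%:C * P 0 0 - (0 +i* coshr vphi) * bh phi P.
Proof.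
rewrite /bh mul2E !mxE /= mulrDr. congr (_ + _).
  transitivity (cexpi (-phi) * cexpi phi * ((sinhr vphi)%:C * P 0 0)); first by ring.
  by rewrite cexpiK mul1r.
have -> : ((- coshr vphi)*i) = - ((coshr vphi)*i) :> R[i] by rewrite oppcE oppr0.
ring.
Qed.
Lemma alMB (R : realType) (P : 'M[R[i]]_2) :
  (P * (MB : 'M[R[i]]_2)) 0 0 = (0 +i* 1) * P 0 0.
Proof. by rewrite mul2E !mxE /= mulr0 addr0 mulrC. Qed.
Lemma bhMB (R : realType) (phi : R) P :
  bh phi (P * (MB : 'M[R[i]]_2)) = (0 +i* (-1)) * bh phi P.
Proof. rewrite /bh mul2E !mxE /= mulr0 add0r. ring. Qed.
End S.
Lemma SS_MA (R : realType) (vphi phi : R) P :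
  SS phi (P * MA vphi phi) = (coshr vphi ^+ 2 + sinhr vphi ^+ 2) * SS phi P
     - 4 * coshr vphi * sinhr vphi * YY phi P.
Proof.
rewrite /SS /YY bhMA alMA; case: (P 0 0) => a b; case: (bh phi P) => c d.
rewrite !realcE !mulcE !oppcE !addcE /=. ring.
Qed.
Lemma YY_MA (R : realType) (vphi phi : R) P :
  YY phi (P * MA vphi phi) = coshr vphi * sinhr vphi * SS phi P
     - (coshr vphi ^+ 2 + sinhr vphi ^+ 2) * YY phi P.
Proof.
rewrite /SS /YY bhMA alMA; case: (P 0 0) => a b; case: (bh phi P) => c d.
rewrite !realcE !mulcE !oppcE !addcE /=. ring.
Qed.
Lemma SS_MB (R : realType) (phi : R) P :
  SS phi (P * MB) = SS phi P.
Proof.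
rewrite /SS bhMB alMB; case: (P 0 0) => a b; case: (bh phi P) => c d.
rewrite !mulcE /=. ring.
Qed.
Lemma YY_MB (R : realType) (phi : R) P :
  YY phi (P * MB) = - YY phi P.
Proof.
rewrite /YY bhMB alMB; case: (P 0 0) => a b; case: (bh phi P) => c d.
rewrite !mulcE /=. ring.
Qed.
Local Close Scope complex_scope.
Definition ext (n : nat) (s : {ffun 'I_n -> bool}) (b : bool) : {ffun 'I_n.+1 -> bool} :=
  [ffun i => if unlift ord_max i is Some j then s j else b].

Arguments ext {n} s b.
Lemma widen_lift n (j : 'I_n) : widen_ord (leqnSn n) j = lift ord_max j.
Proof. apply: val_inj => /=. by rewrite /bump leqNgt ltn_ord. Qed.

Lemma sum_split (R : realType) (n : nat) (G : {ffun 'I_n.+1 -> bool} -> R) :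
  \sum_(t : {ffun 'I_n.+1 -> bool}) G t =
  \sum_(s : {ffun 'I_n -> bool}) (G (ext s true) + G (ext s false)).
Proof.
rewrite (reindex (fun p : {ffun 'I_n -> bool} * bool => ext p.1 p.2)) /=.
  rewrite -(pair_bigA _ (fun s b => G (ext s b))) /=.
  by apply: eq_bigr => s _; rewrite big_bool.
exists (fun t => ([ffun j => t (widen_ord (leqnSn n) j)], t ord_max)).
  move=> [s b] _ /=; congr (_, _).
    by apply/ffunP => j; rewrite !ffunE widen_lift liftK.
  by rewrite ffunE unlift_none.
move=> t _ /=; apply/ffunP => i; rewrite ffunE.
case: (unliftP ord_max i) => [j ->|->]; last by [].
by rewrite ffunE widen_lift.
Qed.

Lemma Pi_ext (R : realType) (vphi phi : R) n (s : {ffun 'I_n -> bool}) b :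
  Pi vphi phi (ext s b) = Pi vphi phi s * (if b then MA vphi phi else MB).
Proof.
rewrite /Pi big_ord_recr /= ffunE unlift_none; congr (_ * _).
by apply: eq_bigr => k _; rewrite ffunE widen_lift liftK.
Qed.

Definition TT {R : realType} (vphi phi : R) n :=
  \sum_(s : {ffun 'I_n -> bool}) SS phi (Pi vphi phi s).
Definition UU {R : realType} (vphi phi : R) n :=
  \sum_(s : {ffun 'I_n -> bool}) YY phi (Pi vphi phi s).

Lemma TT_S (R : realType) (vphi phi : R) n :
  TT vphi phi n.+1 = (1 + (coshr vphi ^+ 2 + sinhr vphi ^+ 2)) * TT vphi phi n
    - 4 * coshr vphi * sinhr vphi * UU vphi phi n.
Proof.
rewrite /TT /UU sum_split !mulr_sumr -sumrB; apply: eq_bigr => s _.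
rewrite !Pi_ext SS_MA SS_MB; ring.
Qed.

Lemma UU_S (R : realType) (vphi phi : R) n :
  UU vphi phi n.+1 = coshr vphi * sinhr vphi * TT vphi phi n
    - (1 + (coshr vphi ^+ 2 + sinhr vphi ^+ 2)) * UU vphi phi n.
Proof.
rewrite /TT /UU sum_split !mulr_sumr -sumrB; apply: eq_bigr => s _.
rewrite !Pi_ext YY_MA YY_MB; ring.
Qed.

Lemma sum_ffun0 (R : realType) (F : {ffun 'I_0 -> bool} -> R) (c : R) :
  (forall s, F s = c) -> \sum_(s : {ffun 'I_0 -> bool}) F s = c.
Proof.
move=> h; rewrite (eq_bigr (fun _ => c)) ?sumr_const; last by move=> s _; exact: h.
by rewrite card_ffun card_ord expn0.
Qed.

Lemma TT_0 (R : realType) (vphi phi : R) : TT vphi phi 0 = 1.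
Proof.
apply: sum_ffun0 => s; rewrite /Pi big_ord0 /SS /bh !mxE /=.
rewrite mulr0 /=; ring.
Qed.

Lemma UU_0 (R : realType) (vphi phi : R) : UU vphi phi 0 = 0.
Proof.
apply: sum_ffun0 => s; rewrite /Pi big_ord0 /YY /bh !mxE /=.
rewrite mulr0 /=; ring.
Qed.


Lemma chsh (R : realType) (x : R) : sinhr x ^+ 2 = coshr x ^+ 2 - 1.
Proof.
have h : expR x * expR (- x) = 1 by rewrite -expRD subrr expR0.
have : coshr x ^+ 2 - sinhr x ^+ 2 = expR x * expR (- x) by rewrite /coshr /sinhr; field.
rewrite h => e; rewrite -e; ring.
Qed.

Lemma by_rel (R : realType) (x y Q s c : R) :
  s ^+ 2 = c ^+ 2 - 1 -> x - y = (s ^+ 2 - (c ^+ 2 - 1)) * Q -> x = y.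
Proof. by move=> h e; apply/eqP; rewrite -subr_eq0 e h subrr mul0r. Qed.

Lemma closed_form (R : realType) (vphi phi : R) k :
  let ch := coshr vphi in let sh := sinhr vphi in
  [/\ TT vphi phi (2 * k) = (4 * ch ^+ 2) ^+ k, UU vphi phi (2 * k) = 0,
      TT vphi phi (2 * k).+1 = 2 * ch ^+ 2 * (4 * ch ^+ 2) ^+ k &
      UU vphi phi (2 * k).+1 = ch * sh * (4 * ch ^+ 2) ^+ k].
Proof.
move=> ch sh.
have hs : sh ^+ 2 = ch ^+ 2 - 1 by exact: chsh.
elim: k => [|k [IT IU IT1 IU1]].
  rewrite muln0 TT_S UU_S TT_0 UU_0 expr0.
  split => //.
  - apply: (@by_rel R _ _ (1) _ _ hs); rewrite /ch /sh; ring.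
  - rewrite /ch /sh; ring.
have e : (2 * k.+1 = (2 * k).+2)%N by rewrite mulnS.
rewrite e.
have T2 : TT vphi phi (2 * k).+2 = (4 * ch ^+ 2) ^+ k.+1.
  rewrite TT_S IT1 IU1 [_ ^+ k.+1]exprS.
  apply: (@by_rel R _ _ (- 2 * ch ^+ 2 * (4 * ch ^+ 2) ^+ k) _ _ hs); rewrite /ch /sh; ring.
have U2 : UU vphi phi (2 * k).+2 = 0.
  rewrite UU_S IT1 IU1.
  apply: (@by_rel R _ _ (- ch * sh * (4 * ch ^+ 2) ^+ k) _ _ hs); rewrite /ch /sh; ring.
split => //.
- rewrite TT_S T2 U2. apply: (@by_rel R _ _ ((4 * ch ^+ 2) ^+ k.+1) _ _ hs); rewrite /ch /sh; ring.
- rewrite UU_S T2 U2 [_ ^+ k.+1]exprS. rewrite /ch /sh; ring.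
Qed.

Lemma expect_TT (R : realType) (vphi phi : R) n :
  expect_n vphi phi n = (2 ^+ n)^-1 * TT vphi phi n.
Proof. by rewrite /expect_n /TT; congr (_ * _); apply: eq_bigr => s _; rewrite (normAB_SS _ phi). Qed.

Lemma two_pow_neq0 (R : realType) n : (2 ^+ n : R) != 0.
Proof. by apply: expf_neq0; rewrite pnatr_eq0. Qed.

Lemma pow4 (R : realType) (ch : R) k : (4 * ch ^+ 2) ^+ k = 2 ^+ (2 * k) * ch ^+ (2 * k).
Proof. by rewrite exprMn !exprM; congr (_ * _); congr (_ ^+ _); ring. Qed.

Lemma expect_even (R : realType) (vphi phi : R) k :
  expect_n vphi phi (2 * k) = coshr vphi ^+ (2 * k).
Proof.
have [T _ _ _] := closed_form _ vphi phi k.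
by rewrite expect_TT T pow4 mulKf // two_pow_neq0.
Qed.

Lemma expect_odd (R : realType) (vphi phi : R) k :
  expect_n vphi phi (2 * k).+1 = coshr vphi ^+ (2 * k).+2.
Proof.
have [_ _ T _] := closed_form _ vphi phi k.
rewrite expect_TT T pow4 !exprS.
have := two_pow_neq0 R (2 * k) => h.
field. by rewrite h.
Qed.

Lemma expect_all (R : realType) (vphi phi : R) n :
  expect_n vphi phi n = coshr vphi ^+ (2 * uphalf n).
Proof.
rewrite -[n in LHS](odd_double_half n) uphalf_half -muln2 mulnC.
case: (odd n) => /=.
  by rewrite add1n expect_odd mulnS.
by rewrite add0n expect_even.
Qed.
Lemma cosh_gt1 (R : realType) (x : R) : x != 0 -> 1 < coshr x.
Proof.
move=> hx.
have h : expR x * expR (- x) = 1 by rewrite -expRD subrr expR0.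
have E0 : 0 < expR x := expR_gt0 x.
have F0 : 0 < expR (- x) := expR_gt0 (- x).
have E1 : expR x != 1.
  apply: contra hx => /eqP e; by rewrite -(expRK x) e ln1.
have sq : 0 < (expR x - 1) ^+ 2 by rewrite lt_def sqr_ge0 andbT sqrf_eq0 subr_eq0.
rewrite /coshr.
have : 0 < (expR x - 1) ^+ 2 * expR (- x) by rewrite mulr_gt0.
have -> : (expR x - 1) ^+ 2 * expR (- x) = expR x + expR (- x) - 2.
  transitivity (expR x * (expR x * expR (-x)) - 2 * (expR x * expR (- x)) + expR (- x)); first by ring.
  rewrite h; ring.
move=> hp; lra.
Qed.

Theorem mainTheorem5 (R : realType) (vphi phi : R) (hvphi : vphi != 0) :
  (forall k : nat, (1 <= k)%N ->
     expect_n vphi phi (2 * k).-1 = coshr vphi ^+ (2 * k) /\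
     expect_n vphi phi (2 * k) = coshr vphi ^+ (2 * k)) /\
  (((2 * n%:R)^-1 * ln (expect_n vphi phi n) : R) @[n --> \oo]
     --> (2^-1 * ln (coshr vphi) : R))%classic /\
  0 < 2^-1 * ln (coshr vphi).
Proof.
have ch1 := @cosh_gt1 R vphi hvphi.
have ch0 : 0 < coshr vphi by lra.
split; [|split].
- case=> [//|k] _; split; last by rewrite expect_even.
  by rewrite mulnS /= expect_odd.
- apply/cvgrPdist_le => e e0.
  set L := ln (coshr vphi).
  have [N hN] : exists N : nat, `|L| / e < N%:R by eexists; exact: truncnS_gt.
  exists N.+1 => // n /= hn.
  rewrite expect_all lnXn // -/L.
  have hu : (2 * uphalf n = n + odd n)%N.
    rewrite uphalf_half. have := odd_double_half n. rewrite -muln2. lia.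
  rewrite hu -[L *+ _]mulr_natr natrD.
  have nn0 : 0 < n%:R :> R by rewrite ltr0n; lia.
  have o0 : 0 <= (odd n)%:R :> R by [].
  have o1 : (odd n)%:R <= 1 :> R by case: (odd n).
  have nN : N%:R <= n%:R :> R by rewrite ler_nat; lia.
  move: hN; rewrite ltr_pdivrMr // => hN.
  have -> : 2^-1 * L - (2 * n%:R)^-1 * (L * (n%:R + (odd n)%:R)) = - (L * (odd n)%:R) / (2 * n%:R).
    by field; rewrite gt_eqF.
  rewrite normrM normrN normrV ?unitfE ?mulf_neq0 ?gt_eqF // (ger0_norm (x := 2 * n%:R)) ?mulr_ge0 ?ltW //.
  rewrite ltr_pdivrMr ?mulr_gt0 // normrM (ger0_norm o0).
  have La := normr_ge0 L.
  nra.
- apply: mulr_gt0; first by rewrite invr_gt0.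
  exact: ln_gt0.
Qed.
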